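(* Consider the system of $N$ symplectic point vortices in $\mathbb R^{2m}=\mathbb C^m$: the Hamiltonian system on $(\mathbb R^{2m})^N$ with coordinates $x_{j,\alpha},y_{j,\alpha}$ ($1\le j\le N$, $1\le\alpha\le m$), Poisson bracket $$\{f,g\}=\sum_{j=1}^N\frac1{\Gamma_j}\sum_{\alpha=1}^m\Big(\frac{\partial f}{\partial x_{j,\alpha}}\frac{\partial g}{\partial y_{j,\alpha}}-\frac{\partial f}{\partial y_{j,\alpha}}\frac{\partial g}{\partial x_{j,\alpha}}\Big)$$ and Hamiltonian $\mathcal H=2C(2m)\sum_{j<k}\Gamma_j\Gamma_k|\tilde z_j-\tilde z_k|^{2-2m}$ for $m>1$ (resp. $\mathcal H=-\frac1{4\pi}\sum_{j<k}\Gamma_j\Gamma_k\ln|\tilde z_j-\tilde z_k|^2$ for $m=1$). This system is invariant with respect to the group $E(2m)=U(m)\ltimes\mathbb R^{2m}$ of unitary motions of $\mathbb R^{2m}=\mathbb C^m$ (acting diagonally on all vortices). The corresponding $m^2+2m$ conserved quantities, which Poisson commute with $\mathcal H$, are $$Q_\alpha=\sum_{j=1}^N\Gamma_jx_{j,\alpha},\quad P_\alpha=\sum_{j=1}^N\Gamma_jy_{j,\alpha}\quad(1\le\alpha\le m),$$ $$F^+_{\alpha\beta}=\sum_{j=1}^N\Gamma_j(x_{j,\alpha}x_{j,\beta}+y_{j,\alpha}y_{j,\beta})\quad(1\le\alpha\le\beta\le m),$$ $$F^-_{\alpha\beta}=\sum_{j=1}^N\Gamma_j(x_{j,\alpha}y_{j,\beta}-x_{j,\beta}y_{j,\alpha})\quad(1\le\alpha<\beta\le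 m).$$
   Context: $\tilde z_j=(x_{j,1},\dots,x_{j,m},y_{j,1},\dots,y_{j,m})\in\mathbb R^{2m}$ is the position of the $j$-th vortex, identified with $(z_{j,1},\dots,z_{j,m})\in\mathbb C^m$ via $z_{j,\alpha}=x_{j,\alpha}+iy_{j,\alpha}$; $\Gamma_j\neq0$ are real vortex strengths; $|\cdot|$ is the Euclidean norm; $C(2m)$ is the constant with $\Delta(C(2m)|\tilde z|^{2-2m})=\delta$ in $\mathbb R^{2m}$. The equations of motion are $\Gamma_j\dot x_{j,\alpha}=\partial\mathcal H/\partial y_{j,\alpha}$, $\Gamma_j\dot y_{j,\alpha}=-\partial\mathcal H/\partial x_{j,\alpha}$. *)

(* Defs.v *)
From HB Require Import structures.
From mathcomp Require Import all_boot all_order all_algebra.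
From mathcomp Require Import all_classical all_reals all_analysis.
Set Implicit Arguments. Unset Strict Implicit. Unset Printing Implicit Defensive.
Import Order.TTheory GRing.Theory Num.Theory.
Local Open Scope ring_scope.

(* A configuration of N vortices in R^{2m} = C^m is given by the two
   coordinate arrays x, y : 'I_N -> 'I_m -> R, with z_{j,a} = x j a + i y j a. *)

Section Vortex.
Variable R : realType.
Variables N m : nat.
Notation coord := ('I_N -> 'I_m -> R).

Definition shift (x : coord) (j : 'I_N) (a : 'I_m) (t : R) : coord :=
  fun k b => x k b + (if (k == j) && (b == a) then t else 0).

Definition dX (f : coord -> coord -> R) (x y : coord) j a : R :=
  derive1 (fun t => f (shift x j a t) y) 0.
Definition dY (f : coord -> coord -> R) (x y : coord) j a : R :=
  derive1 (fun t => f x (shift y j a t)) 0.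

Definition pbracket (Gam : 'I_N -> R) (f g : coord -> coord -> R) (x y : coord) : R :=
  \sum_(j < N) (Gam j)^-1 *
    \sum_(a < m) (dX f x y j a * dY g x y j a - dY f x y j a * dX g x y j a).

Definition vdist (x y : coord) (j k : 'I_N) : R :=
  Num.sqrt (\sum_(a < m) ((x j a - x k a) ^+ 2 + (y j a - y k a) ^+ 2)).

(* C(2m): Delta (C(2m) |z|^{2-2m}) = delta in R^{2m}, m > 1;
   |S^{2m-1}| = 2 pi^m / (m-1)!, C(n) = 1 / ((2-n) |S^{n-1}|). *)
Definition Cconst : R :=
  ((m.-1)`!)%:R / ((2 - 2 * m%:R) * (2 * pi ^+ m)).

Definition Ham (Gam : 'I_N -> R) (x y : coord) : R :=
  if m == 1%N then
    - (4 * pi)^-1 * \sum_(j < N) \sum_(k < N | (j < k)%N)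
        Gam j * Gam k * ln (vdist x y j k ^+ 2)
  else
    2 * Cconst * \sum_(j < N) \sum_(k < N | (j < k)%N)
        Gam j * Gam k * (vdist x y j k ^+ (2 * m - 2))^-1.

Definition Qc (Gam : 'I_N -> R) (a : 'I_m) (x y : coord) : R :=
  \sum_(j < N) Gam j * x j a.
Definition Pc (Gam : 'I_N -> R) (a : 'I_m) (x y : coord) : R :=
  \sum_(j < N) Gam j * y j a.
Definition Fplus (Gam : 'I_N -> R) (a b : 'I_m) (x y : coord) : R :=
  \sum_(j < N) Gam j * (x j a * x j b + y j a * y j b).
Definition Fminus (Gam : 'I_N -> R) (a b : 'I_m) (x y : coord) : R :=
  \sum_(j < N) Gam j * (x j a * y j b - x j b * y j a).

(* action of the unitary motion z |-> A z + c of C^m, A = U + i V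
   unitary, c = c1 + i c2, acting diagonally on all vortices *)
Definition unitary_mx (U V : 'M[R]_m) : Prop :=
  U^T *m U + V^T *m V = 1%:M /\ U^T *m V = V^T *m U.
Definition actX (U V : 'M[R]_m) (c1 : 'I_m -> R) (x y : coord) : coord :=
  fun j a => \sum_(b < m) (U a b * x j b - V a b * y j b) + c1 a.
Definition actY (U V : 'M[R]_m) (c2 : 'I_m -> R) (x y : coord) : coord :=
  fun j a => \sum_(b < m) (V a b * x j b + U a b * y j b) + c2 a.

Definition distinct_pos (x y : coord) : Prop :=
  forall j k : 'I_N, j != k -> exists a : 'I_m, x j a != x k a \/ y j a != y k a.

End Vortex.

(* Main.v *)
Require Import Defs.
From HB Require Import structures.
From mathcomp Require Import all_boot all_order all_algebra.
From mathcomp Require Import all_classical all_reals all_analysis.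
From mathcomp Require Import ring lra zify.
Import Order.TTheory GRing.Theory Num.Theory.
Local Open Scope ring_scope.

Section Main.
Variables (R : realType) (N m : nat) (Gam : 'I_N -> R).
Notation coord := ('I_N -> 'I_m -> R).

Lemma sum_only {I : finType} (F : I -> R) j :
  (forall k, k != j -> F k = 0) -> \sum_k F k = F j.
Proof. by move=> H; rewrite (bigD1 j) //= big1 ?addr0. Qed.

Lemma quad_is_derive (A B C : R) :
  is_derive (0:R) 1 (fun t : R => A + B * t + C * t ^+ 2) B.
Proof.
have -> : (fun t : R => A + B * t + C * t ^+ 2) = horner (A%:P + B *: 'X + C *: 'X^2).
  by apply/funext => t; rewrite !hornerE.
apply: (is_derive_eq (is_derive_poly _ _)).
by rewrite !(derivD, derivZ, derivC, derivX, derivXn) !hornerE /=.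
Qed.

Lemma comp_is_derive (phi g : R -> R) B :
  is_derive (0:R) 1 g B -> derivable phi (g 0) 1 ->
  is_derive (0:R) 1 (fun t => phi (g t)) (derive1 phi (g 0) * B).
Proof.
move=> dg dphi.
have dg' : derivable g 0 1 by exact: ex_derive.
apply: DeriveDef.
  apply/derivable1_diffP; apply: (@differentiable_comp _ _ _ _ g phi).
    exact/derivable1_diffP.
  exact/derivable1_diffP.
rewrite -derive1E (derive1_comp dg' dphi).
congr (_ * _); rewrite derive1E; exact: (@derive_val _ _ _ _ _ _ _ dg).
Qed.

Lemma scale_is_derive {x0 : R} (k : R) {f : R -> R} {df : R} :
  is_derive x0 1 f df -> is_derive x0 1 (fun t => k * f t) (k * df).
Proof. move=> H; exact: (is_deriveZ k H). Qed.

Lemma sumP_is_derive n (P : pred 'I_n) (h : 'I_n -> R -> R) (dh : 'I_n -> R) :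
  (forall i, P i -> is_derive (0:R) 1 (h i) (dh i)) ->
  is_derive (0:R) 1 (fun t => \sum_(i < n | P i) h i t) (\sum_(i < n | P i) dh i).
Proof.
move=> H.
have -> : (fun t => \sum_(i < n | P i) h i t) = \sum_(i < n | P i) h i by rewrite fct_sumE.
elim/big_ind2 : _ => //; first exact: is_derive_cst.
by move=> *; exact: is_deriveD.
Qed.

Lemma ext_is_derive (f g : R -> R) df :
  (forall t, f t = g t) -> is_derive (0:R) 1 g df -> is_derive (0:R) 1 f df.
Proof. by move=> e; have -> : f = g by apply/funext. Qed.


Definition Sq (x y : coord) p q : R :=
  \sum_(a < m) ((x p a - x q a) ^+ 2 + (y p a - y q a) ^+ 2).

Definition phi (s : R) : R :=
  if m == 1%N then - (4 * pi)^-1 * ln s else 2 * Cconst R m * (s ^+ m.-1)^-1.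

Lemma Sq_ge0 x y p q : 0 <= Sq x y p q.
Proof. by apply: sumr_ge0 => a _; apply: addr_ge0; apply: sqr_ge0. Qed.

Lemma Ham_eq (x y : coord) :
  Ham Gam x y = \sum_(j < N) \sum_(k < N | (j < k)%N) Gam j * Gam k * phi (Sq x y j k).
Proof.
rewrite /Ham /phi /vdist.
case: eqP => _.
  rewrite mulr_sumr; apply: eq_bigr => j _; rewrite mulr_sumr; apply: eq_bigr => k _.
  by rewrite sqr_sqrtr ?Sq_ge0 //; rewrite /Sq; ring.
rewrite mulr_sumr; apply: eq_bigr => j _; rewrite mulr_sumr; apply: eq_bigr => k _.
have -> : (2 * m - 2)%N = (2 * m.-1)%N by case: m => // n; rewrite mulnS /= subn2 /=; lia.
by rewrite exprM sqr_sqrtr ?Sq_ge0 //; rewrite /Sq; ring.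
Qed.

Definition dl (p j : 'I_N) : R := (p == j)%:R.

Lemma shiftE (x : coord) j c t k b :
  Defs.shift x j c t k b = x k b + (k == j)%:R * (b == c)%:R * t.
Proof. by rewrite /Defs.shift; case: (k == j); case: (b == c) => /=; ring. Qed.

Lemma Sq_shiftX x y j c t p q :
  Sq (Defs.shift x j c t) y p q =
  Sq x y p q + (2 * (x p c - x q c) * (dl p j - dl q j)) * t + (dl p j - dl q j) ^+ 2 * t ^+ 2.
Proof.
rewrite /Sq (bigD1 c) //= [in RHS](bigD1 c) //= !shiftE eqxx /=.
rewrite (eq_bigr (fun a => (x p a - x q a) ^+ 2 + (y p a - y q a) ^+ 2)); last first.
  by move=> a /negbTE ac; rewrite !shiftE ac /= !(mulr0n, mulr0, mul0r, addr0).
rewrite /dl; ring.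
Qed.

Lemma Sq_shiftY x y j c t p q :
  Sq x (Defs.shift y j c t) p q =
  Sq x y p q + (2 * (y p c - y q c) * (dl p j - dl q j)) * t + (dl p j - dl q j) ^+ 2 * t ^+ 2.
Proof.
rewrite /Sq (bigD1 c) //= [in RHS](bigD1 c) //= !shiftE eqxx /=.
rewrite (eq_bigr (fun a => (x p a - x q a) ^+ 2 + (y p a - y q a) ^+ 2)); last first.
  by move=> a /negbTE ac; rewrite !shiftE ac /= !(mulr0n, mulr0, mul0r, addr0).
rewrite /dl; ring.
Qed.


Lemma derivable_phi s : 0 < s -> derivable phi s 1.
Proof.
move=> hs; rewrite /phi; case: (m == 1%N) => /=.
  have := scale_is_derive (- (4 * pi)^-1) (is_derive1_ln hs).
  by case=> d _; exact: d.
have dp : derivable (horner ('X^(m.-1) : {poly R})) s 1 by exact: derivable_horner.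
have nz : horner ('X^(m.-1) : {poly R}) s != 0 by rewrite hornerXn expf_neq0 // lt0r_neq0.
have dv := derivableV nz dp.
have := scale_is_derive (2 * Cconst R m) (derivableP dv).
case=> d _.
have -> : (fun s0 : R => 2 * Cconst R m * (s0 ^+ m.-1)^-1) =
   (fun t => 2 * Cconst R m * (horner ('X^(m.-1) : {poly R}) t)^-1).
  by apply/funext => t; rewrite hornerXn.
exact: d.
Qed.

Lemma Sq_gt0 x y (p q : 'I_N) : distinct_pos x y -> (p < q)%N -> 0 < Sq x y p q.
Proof.
move=> D pq.
have pnq : p != q by apply/eqP => e; move: pq; rewrite e ltnn.
have [a Ha] := D _ _ pnq.
rewrite /Sq (bigD1 a) //=.
have h1 : 0 < (x p a - x q a) ^+ 2 + (y p a - y q a) ^+ 2.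
  case: Ha => Ha.
    have : 0 < (x p a - x q a) ^+ 2 by rewrite exprn_even_gt0 //= subr_eq0.
    have := sqr_ge0 (y p a - y q a); lra.
  have : 0 < (y p a - y q a) ^+ 2 by rewrite exprn_even_gt0 //= subr_eq0.
  have := sqr_ge0 (x p a - x q a); lra.
have h2 : 0 <= \sum_(i < m | i != a) ((x p i - x q i) ^+ 2 + (y p i - y q i) ^+ 2).
  by apply: sumr_ge0 => i _; apply: addr_ge0; apply: sqr_ge0.
lra.
Qed.

Lemma dXH_is x y j c : distinct_pos x y ->
  is_derive (0:R) 1 (fun t => Ham Gam (Defs.shift x j c t) y)
   (\sum_(p < N) \sum_(q < N | (p < q)%N) Gam p * Gam q *
      (derive1 phi (Sq x y p q) * (2 * (x p c - x q c) * (dl p j - dl q j)))).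
Proof.
move=> D.
apply: ext_is_derive.
  by move=> t; rewrite Ham_eq; apply: eq_bigr => p _; apply: eq_bigr => q _; rewrite Sq_shiftX.
apply: sumP_is_derive => p _; apply: sumP_is_derive => q pq.
apply: scale_is_derive.
apply: (is_derive_eq (@comp_is_derive phi _ _ (quad_is_derive _ _ _) _)).
  by rewrite mulr0 expr0n /= mulr0 !addr0; apply: derivable_phi; apply: Sq_gt0.
by rewrite mulr0 expr0n /= mulr0 !addr0.
Qed.

Lemma dYH_is x y j c : distinct_pos x y ->
  is_derive (0:R) 1 (fun t => Ham Gam x (Defs.shift y j c t))
   (\sum_(p < N) \sum_(q < N | (p < q)%N) Gam p * Gam q *
      (derive1 phi (Sq x y p q) * (2 * (y p c - y q c) * (dl p j - dl q j)))).
Proof.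
move=> D.
apply: ext_is_derive.
  by move=> t; rewrite Ham_eq; apply: eq_bigr => p _; apply: eq_bigr => q _; rewrite Sq_shiftY.
apply: sumP_is_derive => p _; apply: sumP_is_derive => q pq.
apply: scale_is_derive.
apply: (is_derive_eq (@comp_is_derive phi _ _ (quad_is_derive _ _ _) _)).
  by rewrite mulr0 expr0n /= mulr0 !addr0; apply: derivable_phi; apply: Sq_gt0.
by rewrite mulr0 expr0n /= mulr0 !addr0.
Qed.

Lemma sum_dl1 (F : 'I_N -> R) p : \sum_j dl p j * F j = F p.
Proof.
rewrite (sum_only _ p) /dl ?eqxx ?mul1r // => k kp.
by rewrite eq_sym (negbTE kp) mul0r.
Qed.

Lemma sum_dl (F : 'I_N -> R) p q : \sum_j (dl p j - dl q j) * F j = F p - F q.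
Proof.
rewrite (eq_bigr (fun j => dl p j * F j - dl q j * F j)); last by move=> j _; rewrite mulrBl.
by rewrite sumrB !sum_dl1.
Qed.

Lemma bracket0 f x y (aX aY : 'I_N -> 'I_m -> R) (W : 'I_N -> 'I_N -> R) :
  (forall j, Gam j != 0) ->
  (forall j c, dX f x y j c = Gam j * aX j c) ->
  (forall j c, dY f x y j c = Gam j * aY j c) ->
  (forall j c, dX (Ham Gam) x y j c =
     \sum_(p < N) \sum_(q < N | (p < q)%N) W p q * (2 * (x p c - x q c) * (dl p j - dl q j))) ->
  (forall j c, dY (Ham Gam) x y j c =
     \sum_(p < N) \sum_(q < N | (p < q)%N) W p q * (2 * (y p c - y q c) * (dl p j - dl q j))) ->
  (forall p q, \sum_(c < m) ((aX p c - aX q c) * (y p c - y q c) - (aY p c - aY q c) * (x p c - x q c)) = 0) ->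
  pbracket Gam f (Ham Gam) x y = 0.
Proof.
move=> G0 hX hY hXH hYH cond.
rewrite /pbracket.
transitivity (\sum_(j < N) \sum_(c < m) (aX j c * dY (Ham Gam) x y j c - aY j c * dX (Ham Gam) x y j c)).
  apply: eq_bigr => j _; rewrite mulr_sumr; apply: eq_bigr => c _; rewrite hX hY.
  by rewrite mulrBr !mulrA mulVf // !mul1r.
transitivity (\sum_(j < N) \sum_(c < m) \sum_(p < N) \sum_(q < N | (p < q)%N)
   ((dl p j - dl q j) * (W p q * 2 * (aX j c * (y p c - y q c) - aY j c * (x p c - x q c))))).
  apply: eq_bigr => j _; apply: eq_bigr => c _; rewrite hXH hYH !mulr_sumr -(@sumrB _ _ _ xpredT).
  apply: eq_bigr => p _; rewrite !mulr_sumr -sumrB; apply: eq_bigr => q _; rewrite /dl; ring.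
transitivity (\sum_(p < N) \sum_(q < N | (p < q)%N) \sum_(j < N) \sum_(c < m)
   ((dl p j - dl q j) * (W p q * 2 * (aX j c * (y p c - y q c) - aY j c * (x p c - x q c))))).
  rewrite (eq_bigr (fun j => \sum_(p < N) \sum_(q < N | (p < q)%N) \sum_(c < m)
   ((dl p j - dl q j) * (W p q * 2 * (aX j c * (y p c - y q c) - aY j c * (x p c - x q c)))))); last first.
    move=> j _; rewrite exchange_big; apply: eq_bigr => p _; exact: exchange_big.
  rewrite exchange_big; apply: eq_bigr => p _; exact: exchange_big.
apply: big1 => p _; apply: big1 => q _.
rewrite exchange_big /=.
rewrite (eq_bigr (fun c => W p q * 2 * (aX p c * (y p c - y q c) - aY p c * (x p c - x q c)) -
    W p q * 2 * (aX q c * (y p c - y q c) - aY q c * (x p c - x q c)))); last first.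
  by move=> c _; rewrite (sum_dl (fun j => W p q * 2 * (aX j c * (y p c - y q c) - aY j c * (x p c - x q c)))).
rewrite (eq_bigr (fun c => W p q * 2 * ((aX p c - aX q c) * (y p c - y q c) - (aY p c - aY q c) * (x p c - x q c)))); last first.
  by move=> c _; ring.
by rewrite -mulr_sumr cond mulr0.
Qed.

Lemma dX_quad (f : coord -> coord -> R) (x y : coord) (j : 'I_N) (c : 'I_m) B C :
  (forall t, f (Defs.shift x j c t) y = f x y + B * t + C * t ^+ 2) -> dX f x y j c = B.
Proof.
move=> e; rewrite /dX derive1E.
have H := @ext_is_derive _ _ _ e (quad_is_derive (f x y) B C).
exact: (@derive_val _ _ _ _ _ _ _ H).
Qed.

Lemma dY_quad (f : coord -> coord -> R) (x y : coord) (j : 'I_N) (c : 'I_m) B C :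
  (forall t, f x (Defs.shift y j c t) = f x y + B * t + C * t ^+ 2) -> dY f x y j c = B.
Proof.
move=> e; rewrite /dY derive1E.
have H := @ext_is_derive _ _ _ e (quad_is_derive (f x y) B C).
exact: (@derive_val _ _ _ _ _ _ _ H).
Qed.

Lemma dXH_eq x y j c : distinct_pos x y ->
  dX (Ham Gam) x y j c = \sum_(p < N) \sum_(q < N | (p < q)%N)
    (Gam p * Gam q * derive1 phi (Sq x y p q)) * (2 * (x p c - x q c) * (dl p j - dl q j)).
Proof.
move=> D; rewrite /dX derive1E (@derive_val _ _ _ _ _ _ _ (dXH_is x y j c D)).
by apply: eq_bigr => p _; apply: eq_bigr => q _; rewrite mulrA.
Qed.

Lemma dYH_eq x y j c : distinct_pos x y ->
  dY (Ham Gam) x y j c = \sum_(p < N) \sum_(q < N | (p < q)%N)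
    (Gam p * Gam q * derive1 phi (Sq x y p q)) * (2 * (y p c - y q c) * (dl p j - dl q j)).
Proof.
move=> D; rewrite /dY derive1E (@derive_val _ _ _ _ _ _ _ (dYH_is x y j c D)).
by apply: eq_bigr => p _; apply: eq_bigr => q _; rewrite mulrA.
Qed.

Lemma sum_split_j (G H : 'I_N -> R) j (B C t : R) :
  (forall k, k != j -> G k = H k) -> G j = H j + B * t + C * t ^+ 2 ->
  \sum_k G k = \sum_k H k + B * t + C * t ^+ 2.
Proof.
move=> h1 h2; rewrite (bigD1 j) //= [in RHS](bigD1 j) //= h2 (eq_bigr _ h1).
ring.
Qed.

Lemma sum_dlm2 (F1 F2 : 'I_m -> R) a b :
  \sum_(c < m) ((a == c)%:R * F1 c + (b == c)%:R * F2 c) = F1 a + F2 b.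
Proof.
rewrite big_split /= (sum_only _ a) ?eqxx ?mul1r; last first.
  by move=> k ka; rewrite eq_sym (negbTE ka) mul0r.
rewrite (sum_only _ b) ?eqxx ?mul1r //.
by move=> k kb; rewrite eq_sym (negbTE kb) mul0r.
Qed.

Lemma dX_Qc a (x y : coord) j c : dX (Qc Gam a) x y j c = Gam j * (a == c)%:R.
Proof.
apply: (@dX_quad _ _ _ _ _ _ 0) => t; rewrite /Qc.
apply: (@sum_split_j _ _ j) => [k kj|]; first by rewrite shiftE (negbTE kj) /=; ring.
by rewrite shiftE eqxx /=; ring.
Qed.

Lemma dY_Qc a (x y : coord) j c : dY (Qc Gam a) x y j c = Gam j * 0.
Proof. by apply: (@dY_quad _ _ _ _ _ _ 0) => t; rewrite /Qc; ring. Qed.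

Lemma dX_Pc a (x y : coord) j c : dX (Pc Gam a) x y j c = Gam j * 0.
Proof. by apply: (@dX_quad _ _ _ _ _ _ 0) => t; rewrite /Pc; ring. Qed.

Lemma dY_Pc a (x y : coord) j c : dY (Pc Gam a) x y j c = Gam j * (a == c)%:R.
Proof.
apply: (@dY_quad _ _ _ _ _ _ 0) => t; rewrite /Pc.
apply: (@sum_split_j _ _ j) => [k kj|]; first by rewrite shiftE (negbTE kj) /=; ring.
by rewrite shiftE eqxx /=; ring.
Qed.

Lemma dX_Fp a b (x y : coord) j c :
  dX (Fplus Gam a b) x y j c = Gam j * ((a == c)%:R * x j b + (b == c)%:R * x j a).
Proof.
apply: (@dX_quad _ _ _ _ _ _ (Gam j * ((a == c)%:R * (b == c)%:R))) => t; rewrite /Fplus.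
apply: (@sum_split_j _ _ j) => [k kj|]; first by rewrite !shiftE (negbTE kj) /=; ring.
by rewrite !shiftE eqxx /=; ring.
Qed.

Lemma dY_Fp a b (x y : coord) j c :
  dY (Fplus Gam a b) x y j c = Gam j * ((a == c)%:R * y j b + (b == c)%:R * y j a).
Proof.
apply: (@dY_quad _ _ _ _ _ _ (Gam j * ((a == c)%:R * (b == c)%:R))) => t; rewrite /Fplus.
apply: (@sum_split_j _ _ j) => [k kj|]; first by rewrite !shiftE (negbTE kj) /=; ring.
by rewrite !shiftE eqxx /=; ring.
Qed.

Lemma dX_Fm a b (x y : coord) j c :
  dX (Fminus Gam a b) x y j c = Gam j * ((a == c)%:R * y j b - (b == c)%:R * y j a).
Proof.
apply: (@dX_quad _ _ _ _ _ _ 0) => t; rewrite /Fminus.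
apply: (@sum_split_j _ _ j) => [k kj|]; first by rewrite !shiftE (negbTE kj) /=; ring.
by rewrite !shiftE eqxx /=; ring.
Qed.

Lemma dY_Fm a b (x y : coord) j c :
  dY (Fminus Gam a b) x y j c = Gam j * ((b == c)%:R * x j a - (a == c)%:R * x j b).
Proof.
apply: (@dY_quad _ _ _ _ _ _ 0) => t; rewrite /Fminus.
apply: (@sum_split_j _ _ j) => [k kj|]; first by rewrite !shiftE (negbTE kj) /=; ring.
by rewrite !shiftE eqxx /=; ring.
Qed.

Lemma sqr_sum (f : 'I_m -> R) :
  (\sum_(b < m) f b) ^+ 2 = \sum_(b < m) \sum_(b' < m) f b * f b'.
Proof. by rewrite expr2 mulr_suml; apply: eq_bigr => b _; rewrite mulr_sumr. Qed.

Lemma unitary_norm (U V : 'M[R]_m) (u v : 'I_m -> R) : unitary_mx U V ->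
  \sum_(a < m) ((\sum_(b < m) (U a b * u b - V a b * v b)) ^+ 2 +
                (\sum_(b < m) (V a b * u b + U a b * v b)) ^+ 2)
  = \sum_(a < m) (u a ^+ 2 + v a ^+ 2).
Proof.
move=> [H1 H2].
have E1 : forall b b', \sum_(a < m) (U a b * U a b' + V a b * V a b') = (b == b')%:R.
  move=> b b'; have := congr1 (fun M : 'M[R]_m => M b b') H1; rewrite !mxE big_split /= => <-.
  by congr (_ + _); apply: eq_bigr => a _; rewrite mxE.
have E2 : forall b b', \sum_(a < m) (V a b * U a b' - U a b * V a b') = 0.
  move=> b b'; have := congr1 (fun M : 'M[R]_m => M b b') H2; rewrite !mxE => e.
  rewrite sumrB; apply/eqP; rewrite subr_eq0; apply/eqP.
  have -> : \sum_(a < m) V a b * U a b' = \sum_(a < m) V^T b a * U a b'.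
    by apply: eq_bigr => a _; rewrite mxE.
  rewrite -e; by apply: eq_bigr => a _; rewrite mxE.
transitivity (\sum_(a < m) \sum_(b < m) \sum_(b' < m)
  ((U a b * u b - V a b * v b) * (U a b' * u b' - V a b' * v b') +
   (V a b * u b + U a b * v b) * (V a b' * u b' + U a b' * v b'))).
  apply: eq_bigr => a _; rewrite !sqr_sum -big_split /=; apply: eq_bigr => b _.
  by rewrite -big_split.
rewrite exchange_big /=.
rewrite (eq_bigr (fun b => \sum_(b' < m) \sum_(a < m)
  ((U a b * u b - V a b * v b) * (U a b' * u b' - V a b' * v b') +
   (V a b * u b + U a b * v b) * (V a b' * u b' + U a b' * v b')))); last first.
  by move=> b _; rewrite exchange_big.
transitivity (\sum_(b < m) \sum_(b' < m) ((b == b')%:R * (u b * u b' + v b * v b'))).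
  apply: eq_bigr => b _; apply: eq_bigr => b' _.
  transitivity ((\sum_(a < m) (U a b * U a b' + V a b * V a b')) * (u b * u b' + v b * v b') +
     (\sum_(a < m) (V a b * U a b' - U a b * V a b')) * (u b * v b' - v b * u b')).
    rewrite !mulr_suml -big_split /=; apply: eq_bigr => a _; ring.
  by rewrite E1 E2 mul0r addr0.
apply: eq_bigr => b _; rewrite (sum_only _ b) ?eqxx /=; first by ring.
by move=> k kb; rewrite eq_sym (negbTE kb) mul0r.
Qed.

Lemma Sq_act (U V : 'M[R]_m) c1 c2 (x y : coord) p q : unitary_mx U V ->
  Sq (actX U V c1 x y) (actY U V c2 x y) p q = Sq x y p q.
Proof.
move=> HU; rewrite /Sq -(@unitary_norm U V (fun b => x p b - x q b) (fun b => y p b - y q b) HU).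
apply: eq_bigr => a _; rewrite /actX /actY; congr (_ ^+ 2 + _ ^+ 2).
  rewrite opprD addrACA subrr addr0 -(@sumrB _ _ _ xpredT); apply: eq_bigr => b _; ring.
rewrite opprD addrACA subrr addr0 -(@sumrB _ _ _ xpredT); apply: eq_bigr => b _; ring.
Qed.

End Main.

Theorem theorem4p2 (R : realType) (N m : nat) (Gam : 'I_N -> R) :
  (0 < m)%N ->
  (forall j, Gam j != 0) ->
  (* invariance of the Hamiltonian under E(2m) = U(m) |x R^{2m} *)
  (forall (U V : 'M[R]_m) (c1 c2 : 'I_m -> R) (x y : 'I_N -> 'I_m -> R),
     unitary_mx U V -> distinct_pos x y ->
     Ham Gam (actX U V c1 x y) (actY U V c2 x y) = Ham Gam x y) /\
  (* the m^2 + 2m integrals Poisson commute with the Hamiltonian *)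
  (forall x y : 'I_N -> 'I_m -> R, distinct_pos x y ->
     (forall a : 'I_m, pbracket Gam (Qc Gam a) (Ham Gam) x y = 0) /\
     (forall a : 'I_m, pbracket Gam (Pc Gam a) (Ham Gam) x y = 0) /\
     (forall a b : 'I_m, (a <= b)%N -> pbracket Gam (Fplus Gam a b) (Ham Gam) x y = 0) /\
     (forall a b : 'I_m, (a < b)%N -> pbracket Gam (Fminus Gam a b) (Ham Gam) x y = 0)).
Proof.
move=> _ G0; split.
  move=> U V c1 c2 x y HU _; rewrite !Ham_eq; apply: eq_bigr => j _.
  by apply: eq_bigr => k _; rewrite Sq_act.
move=> x y D.
pose W := fun p q : 'I_N => Gam p * Gam q * derive1 (phi R m) (Sq R N m x y p q).
have hXH := fun j c => @dXH_eq R N m Gam x y j c D.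
have hYH := fun j c => @dYH_eq R N m Gam x y j c D.
split; [|split; [|split]].
- move=> a.
  apply: (@bracket0 R N m Gam (Qc Gam a) x y (fun j c => (a == c)%:R) (fun _ _ => 0) W G0
     (@dX_Qc R N m Gam a x y) (@dY_Qc R N m Gam a x y) hXH hYH).
  by move=> p q; apply: big1 => c _; ring.
- move=> a.
  apply: (@bracket0 R N m Gam (Pc Gam a) x y (fun _ _ => 0) (fun j c => (a == c)%:R) W G0
     (@dX_Pc R N m Gam a x y) (@dY_Pc R N m Gam a x y) hXH hYH).
  by move=> p q; apply: big1 => c _; ring.
- move=> a b _.
  apply: (@bracket0 R N m Gam (Fplus Gam a b) x y _ _ W G0
     (@dX_Fp R N m Gam a b x y) (@dY_Fp R N m Gam a b x y) hXH hYH).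
  move=> p q /=.
  rewrite (eq_bigr (fun c => (a == c)%:R *
      ((x p b - x q b) * (y p c - y q c) - (y p b - y q b) * (x p c - x q c)) +
      (b == c)%:R *
      ((x p a - x q a) * (y p c - y q c) - (y p a - y q a) * (x p c - x q c)))); last first.
    by move=> c _; ring.
  rewrite sum_dlm2; ring.
- move=> a b _.
  apply: (@bracket0 R N m Gam (Fminus Gam a b) x y _ _ W G0
     (@dX_Fm R N m Gam a b x y) (@dY_Fm R N m Gam a b x y) hXH hYH).
  move=> p q /=.
  rewrite (eq_bigr (fun c => (a == c)%:R *
      ((y p b - y q b) * (y p c - y q c) + (x p b - x q b) * (x p c - x q c)) +
      (b == c)%:R *
      (- ((y p a - y q a) * (y p c - y q c) + (x p a - x q a) * (x p c - x q c))))); last first.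
    by move=> c _; ring.
  rewrite sum_dlm2; ring.
Qed.
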